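(* For every integer $n>0$, $\pi_1(\mathcal{M}(1,n))$ admits a nontrivial representation into $SL_2(\mathbb{R})$, and hence (since $\mathcal{M}(1,n)$ is an integral homology sphere) a nontrivial representation into $\widetilde{PSL_2(\mathbb{R})}$.
   Context: $\mathcal{M}$ is the SnapPy census manifold $m137$ with $\pi_1(\mathcal{M})=\langle \lambda,\beta \mid \beta^{-1}\lambda^{-1}\beta^{-1}\lambda^{-1}\beta^{2}\lambda=\lambda\beta^{-2}\lambda^{-1}\beta^{2}\rangle$, where $\lambda$ is the homological longitude and $\mu=\beta^2\lambda^{-1}\beta^{-3}\lambda^{-1}\beta^2$ is a meridian. $\mathcal{M}(1,n)$ is the Dehn filling along $\mu+n\lambda$, with $\pi_1(\mathcal{M}(1,n))=\pi_1(\mathcal{M})/\langle\langle\mu\lambda^n\rangle\rangle$. $\widetilde{PSL_2(\mathbb{R})}$ is the universal cover of $PSL_2(\mathbb{R})$. *)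

(* Defs.v *)
From Stdlib Require Import Reals.
Open Scope R_scope.

Fixpoint gpow {G : Type} (mul : G -> G -> G) (one : G) (x : G) (n : nat) : G :=
  match n with
  | O => one
  | S k => mul x (gpow mul one x k)
  end.

(* [m137_filling_rel eqG mul inv one n l b] says that the assignment
   lambda |-> l, beta |-> b satisfies the defining relations of
   pi_1(M(1,n)) = < lambda, beta |
      beta^-1 lambda^-1 beta^-1 lambda^-1 beta^2 lambda = lambda beta^-2 lambda^-1 beta^2,
      mu lambda^n = 1 >,
   mu = beta^2 lambda^-1 beta^-3 lambda^-1 beta^2,
   in a group given by (mul, inv, one), with equality eqG.
   By the universal property of presentations, such (l,b) are exactly the
   homomorphisms pi_1(M(1,n)) -> G. *)
Definition m137_filling_rel {G : Type} (eqG : G -> G -> Prop)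
  (mul : G -> G -> G) (inv : G -> G) (one : G) (n : nat) (l b : G) : Prop :=
  let b2 := mul b b in
  let mu := mul b2 (mul (inv l) (mul (inv b) (mul (inv b) (mul (inv b)
              (mul (inv l) b2))))) in
  eqG (mul (inv b) (mul (inv l) (mul (inv b) (mul (inv l) (mul b2 l)))))
      (mul l (mul (inv b2) (mul (inv l) b2)))
  /\ eqG (mul mu (gpow mul one l n)) one.

Record Mat2 := mkMat2 { m11 : R; m12 : R; m21 : R; m22 : R }.

Definition mdet (A : Mat2) : R := m11 A * m22 A - m12 A * m21 A.

Definition mmul (A B : Mat2) : Mat2 :=
  mkMat2 (m11 A * m11 B + m12 A * m21 B) (m11 A * m12 B + m12 A * m22 B)
         (m21 A * m11 B + m22 A * m21 B) (m21 A * m12 B + m22 A * m22 B).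

(* inverse of a determinant-one matrix (the adjugate) *)
Definition minv (A : Mat2) : Mat2 :=
  mkMat2 (m22 A) (- m12 A) (- m21 A) (m11 A).

Definition mone : Mat2 := mkMat2 1 0 0 1.

Definition in_SL2R (A : Mat2) : Prop := mdet A = 1.

(* ---------- Universal cover of PSL_2(R) ----------
   Model: the group (under composition) of lifts to R of the action of
   SL_2(R) on the circle of rays S^1 = {(cos t, sin t)}: continuous maps
   f : R -> R such that for some A in SL_2(R), A (cos t, sin t) is a positive
   multiple of (cos (f t), sin (f t)) for all t.  This group is the universal
   cover of SL_2(R), which is also the universal cover of PSL_2(R). *)

Definition is_PSL2R_lift (f : R -> R) : Prop :=
  continuity f /\
  exists a b c d : R, a * d - b * c = 1 /\
    forall t : R, exists r : R, r > 0 /\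
      a * cos t + b * sin t = r * cos (f t) /\
      c * cos t + d * sin t = r * sin (f t).

(* An element is represented by a pair (f, f^-1). *)
Definition Lift := ((R -> R) * (R -> R))%type.

Definition is_lift_elt (p : Lift) : Prop :=
  is_PSL2R_lift (fst p) /\
  (forall x, fst p (snd p x) = x) /\ (forall x, snd p (fst p x) = x).

Definition lift_mul (p q : Lift) : Lift :=
  (fun x => fst p (fst q x), fun x => snd q (snd p x)).
Definition lift_inv (p : Lift) : Lift := (snd p, fst p).
Definition lift_one : Lift := (fun x => x, fun x => x).
Definition lift_eq (p q : Lift) : Prop := forall x, fst p x = fst q x.

(* Main.v *)
Require Import Defs.
From Stdlib Require Import Reals Lra Lia Field ZArith.
From Coquelicot Require Import Coquelicot.
Open Scope R_scope.

Lemma mat_ext : forall a b c d a' b' c' d', a = a' -> b = b' -> c = c' -> d = d' ->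
  mkMat2 a b c d = mkMat2 a' b' c' d'.
Proof. intros; subst; reflexivity. Qed.

Definition scale (c : R) (A : Mat2) : Mat2 :=
  mkMat2 (c * m11 A) (c * m12 A) (c * m21 A) (c * m22 A).

Lemma mmul_scale_l : forall c A B, mmul (scale c A) B = scale c (mmul A B).
Proof. intros c [] []; unfold mmul, scale; simpl; apply mat_ext; ring. Qed.
Lemma mmul_scale_r : forall c A B, mmul A (scale c B) = scale c (mmul A B).
Proof. intros c [] []; unfold mmul, scale; simpl; apply mat_ext; ring. Qed.
Lemma minv_scale : forall c A, minv (scale c A) = scale c (minv A).
Proof. intros c []; unfold minv, scale; simpl; apply mat_ext; ring. Qed.
Lemma scale_scale : forall c d A, scale c (scale d A) = scale (c * d) A.
Proof. intros c d []; unfold scale; simpl; apply mat_ext; ring. Qed.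

Definition Lm (z : R) : Mat2 := mkMat2 z 0 0 (/ z).
Definition Bm (z w : R) : Mat2 :=
  mkMat2 (w / (z + 1)) (/ (z + 1)) (- (z^2 + z + 1) / (z + 1)) (z / (w * (z + 1))).
Definition Lh (z : R) : Mat2 := mkMat2 (z^2) 0 0 1.
Definition Bh (z w : R) : Mat2 := mkMat2 (w^2) w (- (z^2 + z + 1) * w) z.
Definition Ez (z w : R) : R := (z^3 - 1) * (w^4 - z) + (z^2 + 1)^2 * w^2.
Definition gz (z w : R) : R :=
  (w / (z + 1)) * (1 + z + z^2 + z^3 + z^4 + z^5 + (z^4 - 1) * w^2) / z^2.

Lemma Lm_h : forall z, 0 < z -> Lm z = scale (/ z) (Lh z).
Proof. intros; unfold Lm, Lh, scale; simpl; apply mat_ext; field; lra. Qed.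
Lemma Bm_h : forall z w, 0 < z -> 0 < w -> Bm z w = scale (/ (w * (z + 1))) (Bh z w).
Proof. intros; unfold Bm, Bh, scale; simpl; apply mat_ext; field; lra. Qed.

Ltac push_scale := repeat (rewrite ?mmul_scale_l, ?mmul_scale_r, ?minv_scale, ?scale_scale).

Lemma rel1_ok : forall z w, 1 < z -> 0 < w -> Ez z w = 0 ->
  let L := Lm z in let B := Bm z w in
  mmul (minv B) (mmul (minv L) (mmul (minv B) (mmul (minv L) (mmul (mmul B B) L))))
  = mmul L (mmul (minv (mmul B B)) (mmul (minv L) (mmul B B))).
Proof.
  intros z w Hz1 Hw Hz L B. unfold L, B. rewrite Lm_h, Bm_h by lra.
  push_scale.
  unfold Ez in Hz.
  assert (Hz0 : z <> 0) by lra. assert (Hz2 : z + 1 <> 0) by lra. assert (Hw0 : w <> 0) by lra.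
  match goal with |- scale ?c1 ?X = scale ?c2 ?Y =>
    assert (Hc : c2 = c1 * z) by (field; lra); rewrite Hc; clear Hc;
    assert (HX : X = scale z Y); [ | rewrite HX, scale_scale; reflexivity] end.
  (lazy beta iota delta [Lh Bh mmul minv scale m11 m12 m21 m22]).
  apply mat_ext; apply Rminus_diag_uniq.
  - (match goal with |- ?X - z * ?Y = 0 =>
    transitivity (((-1)*z^3*w^2 + (1)*z^5*w^2) * ((z^3 - 1) * (w^4 - z) + (z^2 + 1)^2 * w^2)); [ring | rewrite Hz; ring] end).
  - match goal with |- ?X - z * ?Y = 0 =>
    transitivity (((1)*z^2*w^1 + (-1)*z^4*w^1) * ((z^3 - 1) * (w^4 - z) + (z^2 + 1)^2 * w^2)); [ring | rewrite Hz; ring] end.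
  - match goal with |- ?X - z * ?Y = 0 =>
    transitivity (((1)*z^1*w^3 + (1)*z^2*w^3 + (-1)*z^4*w^3 + (-1)*z^5*w^3) * ((z^3 - 1) * (w^4 - z) + (z^2 + 1)^2 * w^2)); [ring | rewrite Hz; ring] end.
  - match goal with |- ?X - z * ?Y = 0 =>
    transitivity (((1)*z^1*w^2 + (-1)*z^3*w^2) * ((z^3 - 1) * (w^4 - z) + (z^2 + 1)^2 * w^2)); [ring | rewrite Hz; ring] end.
Qed.

Definition muW (L B : Mat2) : Mat2 :=
  mmul (mmul B B) (mmul (minv L) (mmul (minv B) (mmul (minv B) (mmul (minv B)
    (mmul (minv L) (mmul B B)))))).

Lemma mu_ok : forall z w, 1 < z -> 0 < w -> Ez z w = 0 ->
  m11 (muW (Lm z) (Bm z w)) = gz z w /\ m12 (muW (Lm z) (Bm z w)) = 0 /\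
  m21 (muW (Lm z) (Bm z w)) = 0.
Proof.
  intros z w Hz1 Hw Hz. unfold muW. rewrite Lm_h, Bm_h by lra.
  push_scale.
  unfold Ez in Hz.
  assert (Hz0 : z <> 0) by lra. assert (Hz2 : z + 1 <> 0) by lra. assert (Hw0 : w <> 0) by lra.
  (lazy beta iota delta [Lh Bh mmul minv scale m11 m12 m21 m22]).
  split; [|split].
  - (match goal with |- ?c * ?X = _ =>
    assert (HX : X = w^8 * (z+1)^6 * (1 + z + z^2 + z^3 + z^4 + z^5 + (z^4 - 1) * w^2)
      + ((-2)*w^6 + (1)*w^8 + (-7)*z^1*w^6 + (1)*z^1*w^8 + (1)*z^2*w^4 + (-14)*z^2*w^6 + (-1)*z^2*w^8 + (2)*z^3*w^4 + (-19)*z^3*w^6 + (-1)*z^3*w^8 + (1)*z^4*w^4 + (-18)*z^4*w^6 + (-1)*z^5*w^4 + (-13)*z^5*w^6 + (-2)*z^6*w^4 + (-6)*z^6*w^6 + (-1)*z^7*w^4 + (-1)*z^7*w^6) * ((z^3 - 1) * (w^4 - z) + (z^2 + 1)^2 * w^2)) by ring;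
    rewrite HX, Hz; unfold gz; field; lra end).
  - match goal with |- ?c * ?X = _ =>
    assert (HX : X = ((1)*w^7 + (2)*z^1*w^5 + (1)*z^1*w^7 + (4)*z^2*w^5 + (-1)*z^2*w^7 + (-1)*z^3*w^3 + (4)*z^3*w^5 + (-1)*z^3*w^7 + (-1)*z^4*w^3 + (4)*z^4*w^5 + (1)*z^5*w^3 + (2)*z^5*w^5 + (1)*z^6*w^3) * ((z^3 - 1) * (w^4 - z) + (z^2 + 1)^2 * w^2)) by ring;
    rewrite HX, Hz; ring end.
  - match goal with |- ?c * ?X = _ =>
    assert (HX : X = ((-1)*w^7 + (-2)*z^1*w^5 + (-2)*z^1*w^7 + (-6)*z^2*w^5 + (-1)*z^2*w^7 + (1)*z^3*w^3 + (-10)*z^3*w^5 + (1)*z^3*w^7 + (2)*z^4*w^3 + (-12)*z^4*w^5 + (2)*z^4*w^7 + (1)*z^5*w^3 + (-10)*z^5*w^5 + (1)*z^5*w^7 + (-1)*z^6*w^3 + (-6)*z^6*w^5 + (-2)*z^7*w^3 + (-2)*z^7*w^5 + (-1)*z^8*w^3) * ((z^3 - 1) * (w^4 - z) + (z^2 + 1)^2 * w^2)) by ring;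
    rewrite HX, Hz; ring end.
Qed.

Definition qz (z : R) : R := (-(z^2+1)^2 + sqrt ((z^2+1)^4 + 4*z*(z^3-1)^2)) / (2*(z^3-1)).

Lemma pow3_gt1 : forall z, 1 < z -> 1 < z^3.
Proof. intros z Hz. replace (z^3) with (z*(z*z)) by ring. assert (1 < z*z) by nra. nra. Qed.

Lemma qz_pos : forall z, 1 < z -> 0 < qz z.
Proof.
  intros z Hz. unfold qz. pose proof (pow3_gt1 z Hz). apply Rdiv_lt_0_compat; [|lra].
  assert (Ha : 0 < (z^2+1)^2) by (apply pow_lt; nra).
  assert (0 < 4*z*(z^3-1)^2).
  { apply Rmult_lt_0_compat; [lra|]. apply pow_lt; lra. }
  rewrite <- (sqrt_pow2 ((z^2+1)^2)) at 1 by lra.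
  assert (sqrt (((z ^ 2 + 1) ^ 2) ^ 2) < sqrt ((z ^ 2 + 1) ^ 4 + 4 * z * (z ^ 3 - 1) ^ 2)).
  { apply sqrt_lt_1_alt. split. apply pow2_ge_0. replace (((z ^ 2 + 1) ^ 2) ^ 2) with ((z ^ 2 + 1) ^ 4) by ring. lra. }
  lra.
Qed.

Lemma qz_eq : forall z, 1 < z -> (z^3 - 1) * (qz z ^ 2 - z) + (z^2 + 1)^2 * qz z = 0.
Proof.
  intros z Hz. pose proof (pow3_gt1 z Hz). unfold qz.
  set (D := (z^2+1)^4 + 4*z*(z^3-1)^2).
  assert (HD : 0 <= D).
  { unfold D. assert (0 <= (z^2+1)^4) by (apply pow_le; nra).
    assert (0 <= 4*z*(z^3-1)^2). { apply Rmult_le_pos; [lra|]. apply pow2_ge_0. } lra. }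
  assert (HS : sqrt D * sqrt D = D) by (apply sqrt_sqrt; auto).
  set (S := sqrt D) in *.
  transitivity ((S * S - D) / (4 * (z^3 - 1))).
  - unfold D. field. lra.
  - rewrite HS. unfold Rminus at 1. rewrite Rplus_opp_r. field. lra.
Qed.

Lemma wz_props : forall z, 1 < z -> 0 < sqrt (qz z) /\ sqrt (qz z) ^ 2 = qz z /\ Ez z (sqrt (qz z)) = 0.
Proof.
  intros z Hz. pose proof (qz_pos z Hz). split; [apply sqrt_lt_R0; auto|].
  assert (H2 : sqrt (qz z) ^ 2 = qz z) by (apply pow2_sqrt; lra). split; auto.
  unfold Ez. replace (sqrt (qz z) ^ 4) with ((sqrt (qz z) ^ 2) ^ 2) by ring. rewrite H2.
  apply qz_eq; auto.
Qed.

Lemma qz_der : forall a, 1 < a -> ex_derive qz a.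
Proof.
  intros a Ha. pose proof (pow3_gt1 a Ha).
  assert (H1 : 0 < (a^2+1)^4 + 4*a*(a^3-1)^2).
  { assert (0 < (a^2+1)^4) by (apply pow_lt; nra).
    assert (0 <= 4*a*(a^3-1)^2). { apply Rmult_le_pos; [lra|]. apply pow2_ge_0. } lra. }
  assert (H2 : 2*(a^3-1) <> 0) by lra.
  unfold qz. auto_derive. simpl in H1, H2. repeat split; auto.
Qed.

Lemma cont_h : forall (n : nat) a, 1 < a -> continuity_pt (fun z => gz z (sqrt (qz z)) * z ^ n - 1) a.
Proof.
  intros n a Ha.
  assert (H : ex_derive (fun z => gz z (sqrt (qz z)) * z ^ n - 1) a).
  { pose proof (qz_pos a Ha). pose proof (qz_der a Ha). unfold gz.
    auto_derive. repeat split; auto; try lra. apply Rmult_integral_contrapositive; split; try lra; apply Rmult_integral_contrapositive; split; lra. }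
  apply continuity_pt_filterlim. exact (ex_derive_continuous _ _ H).
Qed.

Lemma bern : forall k eps, 0 <= eps -> 2 * INR k * eps <= 1 -> (1 + eps) ^ k <= 1 + 2 * INR k * eps.
Proof.
  induction k as [|k IH]; intros eps He Hk.
  - simpl. lra.
  - rewrite S_INR in *. simpl.
    assert (0 <= INR k) by apply pos_INR.
    assert (H1 : (1 + eps) ^ k <= 1 + 2 * INR k * eps) by (apply IH; nra).
    assert (H2 : (1 + eps) * (1 + eps) ^ k <= (1 + eps) * (1 + 2 * INR k * eps)) by (apply Rmult_le_compat_l; lra).
    nra.
Qed.

Lemma pow2_ge2 : forall n, (0 < n)%nat -> 2 <= 2 ^ n.
Proof.
  induction n; intros Hn. lia. destruct n. simpl; lra.
  assert (2 <= 2 ^ S n) by (apply IHn; lia). simpl in *. lra.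
Qed.

Lemma high_end : forall n, (0 < n)%nat -> 0 < gz 2 (sqrt (qz 2)) * 2 ^ n - 1.
Proof.
  intros n Hn. destruct (wz_props 2 ltac:(lra)) as [Hw [Hw2 HE]].
  set (w := sqrt (qz 2)) in *. pose proof (qz_pos 2 ltac:(lra)) as Hq.
  pose proof (qz_eq 2 ltac:(lra)) as HE'. clear HE.
  assert (Hq1 : 1/100 <= qz 2) by nra.
  assert (Hw1 : 1/10 <= w) by nra.
  assert (HG : 21/40 <= gz 2 w).
  { unfold gz. rewrite Hw2.
    replace (w / (2 + 1) * (1 + 2 + 2 ^ 2 + 2 ^ 3 + 2 ^ 4 + 2 ^ 5 + (2 ^ 4 - 1) * qz 2) / 2 ^ 2)
      with (w * (63 + 15 * qz 2) / 12) by field. nra. }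
  pose proof (pow2_ge2 n Hn). nra.
Qed.

Lemma low_end : forall n, (0 < n)%nat ->
  gz (1 + / (20000 * INR n)) (sqrt (qz (1 + / (20000 * INR n)))) * (1 + / (20000 * INR n)) ^ n - 1 < 0.
Proof.
  intros n Hn.
  assert (HnR : 1 <= INR n) by (apply (le_INR 1); lia).
  set (eps := / (20000 * INR n)).
  assert (He0 : 0 < eps) by (unfold eps; apply Rinv_0_lt_compat; lra).
  assert (He1 : 20000 * INR n * eps = 1) by (unfold eps; field; lra).
  assert (He2 : eps <= 1/20000) by nra.
  set (z := 1 + eps).
  assert (Hz : 1 < z) by (unfold z; lra). assert (Hzle : z <= 2) by (unfold z; lra).
  destruct (wz_props z Hz) as [Hw [Hw2 _]]. pose proof (qz_eq z Hz) as HE. pose proof (qz_pos z Hz) as Hq.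
  set (w := sqrt (qz z)) in *. set (q := qz z) in *.
  assert (Hz3 : z ^ 3 - 1 <= 4 * eps).
  { replace (z ^ 3 - 1) with (eps * (3 + 3 * eps + eps * eps)) by (unfold z; ring). nra. }
  assert (Hz3p : 0 < z ^ 3 - 1) by (pose proof (pow3_gt1 z Hz); lra).
  assert (Ha : 4 <= (z ^ 2 + 1) ^ 2).
  { assert (1 <= z ^ 2) by (simpl; nra). replace ((z^2+1)^2) with ((z^2+1)*(z^2+1)) by ring. nra. }
  assert (Hq1 : (z ^ 2 + 1) ^ 2 * q <= z * (z ^ 3 - 1)).
  { assert (0 <= (z ^ 3 - 1) * q ^ 2) by (apply Rmult_le_pos; [lra| apply pow2_ge_0]). nra. }
  assert (Hq2 : q <= 2 * eps).
  { assert (z * (z ^ 3 - 1) <= 2 * (4 * eps)) by (apply Rmult_le_compat; lra).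
    assert (4 * q <= (z ^ 2 + 1) ^ 2 * q) by (apply Rmult_le_compat_r; lra). lra. }
  assert (Hp : forall k, (k <= 5)%nat -> z ^ k <= 2).
  { intros k Hk. unfold z. eapply Rle_trans. apply bern. lra.
    - assert (INR k <= 5) by (replace 5 with (INR 5) by (simpl; ring); apply le_INR; lia).
      pose proof (pos_INR k). nra.
    - assert (INR k <= 5) by (replace 5 with (INR 5) by (simpl; ring); apply le_INR; lia).
      pose proof (pos_INR k). nra. }
  assert (Hp1 : z ^ 1 <= 2) by (apply Hp; lia). assert (Hp2 : z ^ 2 <= 2) by (apply Hp; lia).
  assert (Hp3 : z ^ 3 <= 2) by (apply Hp; lia). assert (Hp4 : z ^ 4 <= 2) by (apply Hp; lia).
  assert (Hp5 : z ^ 5 <= 2) by (apply Hp; lia).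
  assert (Hz4 : 1 <= z ^ 4) by (apply pow_R1_Rle; lra).
  assert (Hz2 : 1 <= z ^ 2) by (apply pow_R1_Rle; lra).
  assert (Hz5 : 1 <= z ^ 5) by (apply pow_R1_Rle; lra).
  assert (Hz3' : 1 <= z ^ 3) by (apply pow_R1_Rle; lra).
  set (P := 1 + z + z ^ 2 + z ^ 3 + z ^ 4 + z ^ 5 + (z ^ 4 - 1) * q).
  assert (HP : 0 <= P <= 13).
  { unfold P. simpl pow in Hp1. split.
    - assert (0 <= (z ^ 4 - 1) * q) by (apply Rmult_le_pos; lra). lra.
    - assert ((z ^ 4 - 1) * q <= 1 * 1) by (apply Rmult_le_compat; lra). lra. }
  set (G := gz z w).
  assert (HG : G * ((z + 1) * z ^ 2) = w * P).
  { unfold G, gz, P. rewrite <- Hw2. field. lra. }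
  assert (Hd : 2 <= (z + 1) * z ^ 2) by nra.
  assert (HG0 : 0 <= G).
  { apply Rmult_le_reg_r with ((z + 1) * z ^ 2); [lra|]. rewrite HG. nra. }
  assert (HG1 : 2 * G <= 13 * w) by nra.
  assert (HG2 : G ^ 2 <= 43 * q).
  { assert (G * G <= (13/2 * w) * (13/2 * w)) by (apply Rmult_le_compat; lra).
    rewrite <- Hw2. simpl. nra. }
  assert (Hzn : (z ^ n) ^ 2 <= 2).
  { rewrite <- pow_mult. unfold z. eapply Rle_trans. apply bern. lra.
    - rewrite mult_INR. simpl. nra.
    - rewrite mult_INR. simpl. nra. }
  assert (Hzn0 : 0 <= z ^ n) by (apply pow_le; lra).
  assert ((G * z ^ n) ^ 2 < 1).
  { replace ((G * z ^ n) ^ 2) with (G ^ 2 * (z ^ n) ^ 2) by ring.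
    assert (G ^ 2 * (z ^ n) ^ 2 <= (43 * q) * 2).
    { apply Rmult_le_compat; auto; apply pow2_ge_0. }
    nra. }
  assert (0 <= G * z ^ n) by (apply Rmult_le_pos; auto).
  fold G. nra.
Qed.

Lemma mat_ext' : forall a b c d a' b' c' d', a = a' -> b = b' -> c = c' -> d = d' ->
  mkMat2 a b c d = mkMat2 a' b' c' d'.
Proof. intros; subst; reflexivity. Qed.

Definition lifts (A : Mat2) (f : R -> R) : Prop :=
  forall t, exists r, r > 0 /\ m11 A * cos t + m12 A * sin t = r * cos (f t) /\
                      m21 A * cos t + m22 A * sin t = r * sin (f t).

Lemma cs1 : forall x, cos x ^ 2 + sin x ^ 2 = 1.
Proof. intro x. pose proof (sin2_cos2 x) as H. unfold Rsqr in H.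
  replace (cos x ^ 2 + sin x ^ 2) with (sin x * sin x + cos x * cos x) by ring. exact H. Qed.

Lemma lifts_comp : forall A B f g, lifts A f -> lifts B g -> lifts (mmul A B) (fun x => f (g x)).
Proof.
  intros A B f g HA HB t. destruct (HB t) as [r1 [Hr1 [H1 H2]]].
  destruct (HA (g t)) as [r2 [Hr2 [H3 H4]]].
  exists (r1 * r2). split; [apply Rmult_lt_0_compat; lra|].
  destruct A as [a11 a12 a21 a22], B as [b11 b12 b21 b22]; unfold mmul; simpl in *. split.
  - transitivity (a11 * (b11 * cos t + b12 * sin t) + a12 * (b21 * cos t + b22 * sin t)); [ring|].
    rewrite H1, H2. transitivity (r1 * (a11 * cos (g t) + a12 * sin (g t))); [ring|].
    rewrite H3. ring.
  - transitivity (a21 * (b11 * cos t + b12 * sin t) + a22 * (b21 * cos t + b22 * sin t)); [ring|].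
    rewrite H1, H2. transitivity (r1 * (a21 * cos (g t) + a22 * sin (g t))); [ring|].
    rewrite H4. ring.
Qed.

Lemma lifts_id : lifts mone (fun x => x).
Proof. intro t. exists 1. unfold mone; simpl. split; [lra|]. split; ring. Qed.

Lemma same_dir : forall A f g, lifts A f -> lifts A g ->
  forall t, cos (f t) = cos (g t) /\ sin (f t) = sin (g t).
Proof.
  intros A f g Hf Hg t. destruct (Hf t) as [r1 [Hr1 [H1 H2]]].
  destruct (Hg t) as [r2 [Hr2 [H3 H4]]].
  assert (E1 : r1 * cos (f t) = r2 * cos (g t)) by congruence.
  assert (E2 : r1 * sin (f t) = r2 * sin (g t)) by congruence.
  assert (Hr : r1 = r2).
  { assert (r1 ^ 2 = r2 ^ 2).
    { transitivity ((r1 * cos (f t))^2 + (r1 * sin (f t))^2).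
      - replace ((r1 * cos (f t))^2 + (r1 * sin (f t))^2) with (r1^2 * (cos (f t) ^ 2 + sin (f t) ^ 2)) by ring.
        rewrite cs1; ring.
      - rewrite E1, E2.
        replace ((r2 * cos (g t))^2 + (r2 * sin (g t))^2) with (r2^2 * (cos (g t) ^ 2 + sin (g t) ^ 2)) by ring.
        rewrite cs1; ring. }
    nra. }
  subst r2. split; apply Rmult_eq_reg_l with r1; lra.
Qed.

Lemma cos_sin_eq : forall a b, cos a = cos b -> sin a = sin b ->
  exists k : Z, a = b + IZR k * (2 * PI).
Proof.
  intros a b Hc Hs.
  assert (H1 : cos (a - b) = 1).
  { rewrite cos_minus, Hc, Hs. pose proof (cs1 b). nra. }
  assert (H2 : sin ((a - b) / 2) = 0).
  { replace (a - b) with (2 * ((a - b) / 2)) in H1 by field.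
    rewrite cos_2a_sin in H1. nra. }
  destruct (sin_eq_0_0 _ H2) as [k Hk]. exists k. lra.
Qed.

Definition sh (k : Z) (x : R) : R := x + IZR k * (2 * PI).

Lemma sh_sh : forall j k x, sh j (sh k x) = sh (k + j) x.
Proof. intros. unfold sh. rewrite plus_IZR. ring. Qed.

Lemma per_sh : forall g : R -> R, (forall x, g (x + 2 * PI) = g x) ->
  forall k x, g (sh k x) = g x.
Proof.
  intros g Hg.
  assert (Hn : forall n x, g (x + INR n * (2 * PI)) = g x).
  { induction n as [|n IH]; intro x.
    - simpl. f_equal. ring.
    - rewrite S_INR. replace (x + (INR n + 1) * (2 * PI)) with ((x + INR n * (2 * PI)) + 2 * PI) by ring.
      rewrite Hg. apply IH. }
  intros k x. unfold sh. destruct (Z_le_gt_dec 0 k) as [Hk|Hk].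
  - rewrite <- (Z2Nat.id k Hk). rewrite <- INR_IZR_INZ. apply Hn.
  - assert (Hk' : (0 <= - k)%Z) by lia.
    pose proof (Hn (Z.to_nat (- k)) (x + IZR k * (2 * PI))) as H.
    rewrite INR_IZR_INZ, Z2Nat.id in H by exact Hk'. rewrite opp_IZR in H.
    replace (x + IZR k * (2 * PI) + - IZR k * (2 * PI)) with x in H by ring. auto.
Qed.

Definition Eqv (f : R -> R) : Prop := forall x, f (x + 2 * PI) = f x + 2 * PI.

Lemma eqv_sh : forall f, Eqv f -> forall k x, f (sh k x) = sh k (f x).
Proof.
  intros f Hf k x.
  pose proof (per_sh (fun y => f y - y)) as H.
  assert (H' : forall x, f (x + 2 * PI) - (x + 2 * PI) = f x - x) by (intro y; rewrite Hf; ring).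
  specialize (H H' k x). simpl in H. unfold sh in *. lra.
Qed.

Lemma cos_per : forall x, cos (x + 2 * PI) = cos x.
Proof. intro x. rewrite cos_plus, cos_2PI, sin_2PI. ring. Qed.
Lemma sin_per : forall x, sin (x + 2 * PI) = sin x.
Proof. intro x. rewrite sin_plus, cos_2PI, sin_2PI. ring. Qed.

Lemma lifts_sh : forall k, lifts mone (sh k).
Proof.
  intros k t. exists 1. unfold mone; simpl. split; [lra|].
  rewrite (per_sh cos cos_per), (per_sh sin sin_per). split; ring.
Qed.

Lemma const_2pi : forall d : R -> R, continuity d ->
  (forall x, exists k : Z, d x = IZR k * (2 * PI)) -> forall x, d x = d 0.
Proof.
  intros d Hd Hk x.
  destruct (Hk 0) as [k0 H0]. destruct (Hk x) as [k1 H1].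
  pose proof PI_RGT_0 as Hpi.
  destruct (Z.lt_total k0 k1) as [Hlt|[Heq|Hgt]].
  - exfalso.
    assert (Hle : IZR k0 + 1 <= IZR k1).
    { rewrite <- plus_IZR. apply IZR_le. lia. }
    destruct (IVT_gen d 0 x ((IZR k0 + /2) * (2 * PI)) Hd) as [z [_ Hz]].
    { rewrite H0, H1. split.
      - apply Rle_trans with (IZR k0 * (2 * PI)); [apply Rmin_l| nra].
      - apply Rle_trans with (IZR k1 * (2 * PI)); [nra| apply Rmax_r]. }
    destruct (Hk z) as [k Hkz]. rewrite Hz in Hkz.
    assert (IZR k = IZR k0 + /2) by (apply Rmult_eq_reg_r with (2 * PI); lra).
    assert (IZR (2 * k - 2 * k0) = 1) by (rewrite minus_IZR, !mult_IZR; simpl; lra).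
    apply eq_IZR in H2. lia.
  - subst. congruence.
  - exfalso.
    assert (Hle : IZR k1 + 1 <= IZR k0).
    { rewrite <- plus_IZR. apply IZR_le. lia. }
    destruct (IVT_gen d 0 x ((IZR k0 - /2) * (2 * PI)) Hd) as [z [_ Hz]].
    { rewrite H0, H1. split.
      - apply Rle_trans with (IZR k1 * (2 * PI)); [apply Rmin_r| nra].
      - apply Rle_trans with (IZR k0 * (2 * PI)); [nra| apply Rmax_l]. }
    destruct (Hk z) as [k Hkz]. rewrite Hz in Hkz.
    assert (IZR k = IZR k0 - /2) by (apply Rmult_eq_reg_r with (2 * PI); lra).
    assert (IZR (2 * k0 - 2 * k) = 1) by (rewrite minus_IZR, !mult_IZR; simpl; lra).
    apply eq_IZR in H2. lia.
Qed.

Definition good (p : Lift) (A : Mat2) : Prop :=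
  continuity (fst p) /\ continuity (snd p) /\ lifts A (fst p) /\ lifts (minv A) (snd p) /\
  Eqv (fst p) /\ Eqv (snd p).

Lemma cont_comp : forall f g, continuity f -> continuity g -> continuity (fun x => f (g x)).
Proof. intros f g Hf Hg. exact (continuity_comp g f Hg Hf). Qed.

Lemma minv_mmul : forall A B, minv (mmul A B) = mmul (minv B) (minv A).
Proof. intros [] []; unfold minv, mmul; simpl; apply mat_ext'; ring. Qed.
Lemma minv_minv : forall A, minv (minv A) = A.
Proof. intros []; unfold minv; simpl; apply mat_ext'; ring. Qed.

Lemma good_mul : forall p q A B, good p A -> good q B -> good (lift_mul p q) (mmul A B).
Proof.
  intros p q A B [c1 [c2 [l1 [l2 [e1 e2]]]]] [d1 [d2 [m1 [m2 [f1 f2]]]]].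
  unfold lift_mul, good; simpl. refine (conj _ (conj _ (conj _ (conj _ (conj _ _))))).
  - apply cont_comp; auto.
  - apply cont_comp; auto.
  - apply lifts_comp; auto.
  - rewrite minv_mmul. apply lifts_comp; auto.
  - intro x. rewrite f1, e1. reflexivity.
  - intro x. rewrite e2, f2. reflexivity.
Qed.

Lemma good_inv : forall p A, good p A -> good (lift_inv p) (minv A).
Proof.
  intros p A [c1 [c2 [l1 [l2 [e1 e2]]]]]. unfold lift_inv, good; simpl.
  refine (conj _ (conj _ (conj _ (conj _ (conj _ _))))); auto. rewrite minv_minv. auto.
Qed.

Lemma good_one : good lift_one mone.
Proof.
  unfold lift_one, good; simpl. refine (conj _ (conj _ (conj _ (conj _ (conj _ _))))).
  - intro x; apply continuity_pt_id.
  - intro x; apply continuity_pt_id.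
  - apply lifts_id.
  - replace (minv mone) with mone by (unfold minv, mone; simpl; apply mat_ext'; ring). apply lifts_id.
  - intro x; reflexivity.
  - intro x; reflexivity.
Qed.

Lemma good_gpow : forall p A n, good p A -> good (gpow lift_mul lift_one p n) (gpow mmul mone A n).
Proof. intros p A n H. induction n; simpl. apply good_one. apply good_mul; auto. Qed.

Definition Nf (a b d t : R) := b * cos t ^ 2 + (d - a) * cos t * sin t - b * sin t ^ 2.
Definition Df (a b d t : R) := a * cos t ^ 2 + 2 * b * cos t * sin t + d * sin t ^ 2.
Definition fs (a b d t : R) := t + atan (Nf a b d t / Df a b d t).

Lemma Df_pos : forall a b d t, 0 < a -> a * d - b * b = 1 -> 0 < Df a b d t.
Proof.
  intros a b d t Ha Hdet. unfold Df.
  set (c := cos t). set (s := sin t). pose proof (cs1 t) as Hcs. fold c s in Hcs.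
  assert (E : a * (a * c ^ 2 + 2 * b * c * s + d * s ^ 2) = (a * c + b * s) ^ 2 + s ^ 2).
  { replace (s^2) with ((a*d - b*b) * s^2) at 2 by (rewrite Hdet; ring). ring. }
  assert (P : 0 < (a * c + b * s) ^ 2 + s ^ 2).
  { destruct (Req_dec s 0) as [Hs|Hs].
    - subst s. rewrite Hs in *. assert (c ^ 2 = 1) by lra.
      replace ((a * c + b * 0) ^ 2 + 0 ^ 2) with (a^2 * c^2) by ring. rewrite H. nra.
    - assert (0 < s ^ 2) by (apply pow2_gt_0; auto). pose proof (pow2_ge_0 (a*c+b*s)). lra. }
  nra.
Qed.

Lemma fs_lifts : forall a b d, 0 < a -> a * d - b * b = 1 -> lifts (mkMat2 a b b d) (fs a b d).
Proof.
  intros a b d Ha Hdet t. simpl.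
  pose proof (Df_pos a b d t Ha Hdet) as HD.
  set (x := Nf a b d t / Df a b d t).
  assert (Hsq : 0 < sqrt (1 + x ^ 2)).
  { apply sqrt_lt_R0. pose proof (pow2_ge_0 x). lra. }
  exists (Df a b d t * sqrt (1 + x ^ 2)). split; [apply Rmult_lt_0_compat; lra|].
  unfold fs. fold x. rewrite cos_plus, sin_plus, cos_atan, sin_atan.
  replace (1 + x²) with (1 + x ^ 2) by (unfold Rsqr; ring).
  pose proof (cs1 t) as Hcs.
  unfold x, Nf, Df in *. split.
  - transitivity ((a * cos t + b * sin t) * (cos t ^ 2 + sin t ^ 2)); [rewrite Hcs; ring|].
    field. split; lra.
  - transitivity ((b * cos t + d * sin t) * (cos t ^ 2 + sin t ^ 2)); [rewrite Hcs; ring|].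
    field. split; lra.
Qed.

Lemma fs_cont : forall a b d, 0 < a -> a * d - b * b = 1 -> continuity (fs a b d).
Proof.
  intros a b d Ha Hdet x.
  assert (H : ex_derive (fs a b d) x).
  { pose proof (Df_pos a b d x Ha Hdet) as HD. unfold fs, Df, Nf in *.
    auto_derive. simpl in HD. lra. }
  apply continuity_pt_filterlim. exact (ex_derive_continuous _ _ H).
Qed.

Lemma fs_eqv : forall a b d, Eqv (fs a b d).
Proof.
  intros a b d x. unfold fs, Nf, Df. rewrite cos_per, sin_per. ring.
Qed.

Lemma fs_inv : forall a b d t, 0 < a -> a * d - b * b = 1 -> fs d (- b) a (fs a b d t) = t.
Proof.
  intros a b d t Ha Hdet.
  assert (Hd : 0 < d) by nra.
  assert (Hdet' : d * a - (- b) * (- b) = 1) by lra.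
  pose proof (lifts_comp _ _ _ _ (fs_lifts d (-b) a Hd Hdet') (fs_lifts a b d Ha Hdet)) as H.
  replace (mmul (mkMat2 d (- b) (- b) a) (mkMat2 a b b d)) with mone in H
    by (unfold mmul, mone; simpl; apply mat_ext'; lra).
  destruct (same_dir _ _ _ H lifts_id t) as [Hc Hs].
  destruct (cos_sin_eq _ _ Hc Hs) as [k Hk].
  assert (Hb : - PI < fs d (- b) a (fs a b d t) - t < PI).
  { unfold fs at 1. unfold fs at 2.
    pose proof (atan_bound (Nf a b d t / Df a b d t)).
    pose proof (atan_bound (Nf d (- b) a (fs a b d t) / Df d (- b) a (fs a b d t))).
    unfold fs in *. lra. }
  rewrite Hk in Hb. pose proof PI_RGT_0.
  assert (Hk0 : (-1 < k < 1)%Z).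
  { split; apply lt_IZR; simpl; nra. }
  assert (k = 0%Z) by lia. subst k. rewrite Hk. simpl. ring.
Qed.

Definition Rm (th : R) : Mat2 := mkMat2 (cos th) (- sin th) (sin th) (cos th).

Lemma decomp : forall A, mdet A = 1 -> exists th a b d, 0 < a /\ a * d - b * b = 1 /\
  A = mmul (Rm th) (mkMat2 a b b d).
Proof.
  intros [a11 a12 a21 a22] Hdet. unfold mdet in Hdet; simpl in Hdet.
  set (x := a11 + a22). set (y := a21 - a12).
  assert (Hr : 0 < x ^ 2 + y ^ 2).
  { destruct (Req_dec x 0) as [Hx|Hx].
    - assert (y <> 0). { intro Hy. unfold x, y in *. assert (a22 = - a11) by lra. assert (a21 = a12) by lra.
        subst. nra. }
      pose proof (pow2_gt_0 y H). pose proof (pow2_ge_0 x). lra.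
    - pose proof (pow2_gt_0 x Hx). pose proof (pow2_ge_0 y). lra. }
  set (rho := sqrt (x ^ 2 + y ^ 2)).
  assert (Hrho : 0 < rho) by (apply sqrt_lt_R0; lra).
  assert (Hrho2 : rho ^ 2 = x ^ 2 + y ^ 2) by (apply pow2_sqrt; lra).
  assert (Hth : exists th, cos th = x / rho /\ sin th = y / rho).
  { assert (Hxy : (x/rho)*(x/rho) + (y/rho)*(y/rho) = 1).
    { replace ((x/rho)*(x/rho) + (y/rho)*(y/rho)) with ((x^2+y^2)/rho^2) by (field; lra).
      rewrite <- Hrho2. field. lra. }
    assert (Hb : -1 <= x / rho <= 1) by nra.
    assert (Hs : sqrt (1 - (x / rho)²) = Rabs (y / rho)).
    { rewrite <- sqrt_Rsqr_abs. f_equal. unfold Rsqr. lra. }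
    destruct (Rle_dec 0 y) as [Hy|Hy].
    - exists (acos (x / rho)). rewrite cos_acos by auto. rewrite sin_acos by auto. split; auto.
      rewrite Hs. apply Rabs_pos_eq. apply Rdiv_le_0_compat; lra.
    - exists (- acos (x / rho)). rewrite cos_neg, sin_neg. rewrite cos_acos by auto.
      rewrite sin_acos by auto. split; auto.
      rewrite Hs. rewrite Rabs_left. field. lra. unfold Rdiv; assert (0 < /rho) by (apply Rinv_0_lt_compat; lra); nra. }
  destruct Hth as [th [Hc Hs]].
  pose proof (cs1 th) as Hcs.
  set (c := cos th) in *. set (s := sin th) in *.
  assert (Hsym : - s * a11 + c * a21 = c * a12 + s * a22).
  { rewrite Hc, Hs. unfold x, y. field. lra. }
  assert (Htr : (c * a11 + s * a21) + (- s * a12 + c * a22) = rho).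
  { rewrite Hc, Hs. transitivity ((x*x + y*y)/rho). { unfold x, y. field. lra. }
    replace (x*x+y*y) with (rho^2) by nra. field. lra. }
  assert (Hdq : (c * a11 + s * a21) * (- s * a12 + c * a22) - (c * a12 + s * a22) * (- s * a11 + c * a21) = 1).
  { replace ((c * a11 + s * a21) * (- s * a12 + c * a22) - (c * a12 + s * a22) * (- s * a11 + c * a21))
      with ((c ^ 2 + s ^ 2) * (a11 * a22 - a12 * a21)) by ring. rewrite Hcs, Hdet. ring. }
  exists th, (c * a11 + s * a21), (c * a12 + s * a22), (- s * a12 + c * a22).
  rewrite Hsym in Hdq.
  split; [nra|]. split; [lra|].
  unfold Rm, mmul; simpl. fold c s. apply mat_ext'.
  - transitivity ((c^2 + s^2) * a11); [rewrite Hcs; ring|].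
    rewrite <- Hsym. ring.
  - transitivity ((c^2 + s^2) * a12); [rewrite Hcs; ring| ring].
  - transitivity ((c^2 + s^2) * a21); [rewrite Hcs; ring|].
    rewrite <- Hsym. ring.
  - transitivity ((c^2 + s^2) * a22); [rewrite Hcs; ring| ring].
Qed.

Lemma lifts_rot : forall th, lifts (Rm th) (fun t => t + th).
Proof.
  intros th t. exists 1. unfold Rm; simpl. split; [lra|].
  rewrite cos_plus, sin_plus. split; ring.
Qed.

Lemma lifts_rotinv : forall th, lifts (minv (Rm th)) (fun t => t - th).
Proof.
  intros th t. exists 1. unfold Rm, minv; simpl. split; [lra|].
  rewrite cos_minus, sin_minus. split; ring.
Qed.

Lemma lift_of : forall A, mdet A = 1 -> exists p, good p A /\
  (forall x, fst p (snd p x) = x) /\ (forall x, snd p (fst p x) = x).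
Proof.
  intros A HA. destruct (decomp A HA) as [th [a [b [d [Ha [Hdet HAe]]]]]].
  assert (Hd : 0 < d) by nra.
  assert (Hdet' : d * a - (- b) * (- b) = 1) by lra.
  exists (fun t => fs a b d t + th, fun t => fs d (- b) a (t - th)).
  unfold good; simpl. refine (conj (conj _ (conj _ (conj _ (conj _ (conj _ _))))) (conj _ _)).
  - apply (continuity_plus (fs a b d) (fun _ => th)). apply fs_cont; auto. apply continuity_const. intros ? ?; reflexivity.
  - apply (cont_comp (fs d (-b) a) (fun t => t - th)). apply fs_cont; auto.
    apply (continuity_minus (fun t => t) (fun _ => th)). apply derivable_continuous, derivable_id.
    apply continuity_const. intros ? ?; reflexivity.
  - rewrite HAe. apply (lifts_comp _ _ (fun t => t + th) (fs a b d)). apply lifts_rot. apply fs_lifts; auto.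
  - rewrite HAe, minv_mmul. apply (lifts_comp _ _ (fs d (-b) a) (fun t => t - th)).
    + apply fs_lifts; auto.
    + apply lifts_rotinv.
  - intro x. rewrite fs_eqv. ring.
  - intro x. replace (x + 2 * PI - th) with ((x - th) + 2 * PI) by ring. apply fs_eqv.
  - intro x. replace (fs d (- b) a (x - th)) with (fs d (- b) a (x - th)) by reflexivity.
    pose proof (fs_inv d (- b) a (x - th) Hd Hdet') as H. rewrite Ropp_involutive in H.
    rewrite H. ring.
  - intro x. replace (fs a b d x + th - th) with (fs a b d x) by ring. apply fs_inv; auto.
Qed.

Definition W1L {G} (mul : G -> G -> G) (inv : G -> G) (l b : G) : G :=
  mul (inv b) (mul (inv l) (mul (inv b) (mul (inv l) (mul (mul b b) l)))).
Definition W1R {G} (mul : G -> G -> G) (inv : G -> G) (l b : G) : G :=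
  mul l (mul (inv (mul b b)) (mul (inv l) (mul b b))).
Definition W2 {G} (mul : G -> G -> G) (inv : G -> G) (one : G) (n : nat) (l b : G) : G :=
  mul (mul (mul b b) (mul (inv l) (mul (inv b) (mul (inv b) (mul (inv b)
              (mul (inv l) (mul b b))))))) (gpow mul one l n).

Lemma rel_iff : forall G (eqG : G -> G -> Prop) mul inv one n l b,
  m137_filling_rel eqG mul inv one n l b <->
  eqG (W1L mul inv l b) (W1R mul inv l b) /\ eqG (W2 mul inv one n l b) one.
Proof. intros. unfold m137_filling_rel, W1L, W1R, W2. tauto. Qed.

Definition shl (k : Z) (p : Lift) : Lift := (fun x => fst p (sh k x), fun x => sh (- k) (snd p x)).

Lemma gpow_shl : forall p a n x, Eqv (fst p) ->
  fst (gpow lift_mul lift_one (shl a p) n) x = sh (Z.of_nat n * a) (fst (gpow lift_mul lift_one p n) x).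
Proof.
  intros p a n x Hp. induction n.
  - simpl. unfold sh. simpl. ring.
  - rewrite Nat2Z.inj_succ. cbn [gpow lift_mul fst shl]. rewrite IHn. rewrite sh_sh. rewrite (eqv_sh _ Hp). f_equal. ring.
Qed.

Lemma lift_rep : forall (L B : Mat2) (n : nat), mdet L = 1 -> mdet B = 1 ->
  m137_filling_rel eq mmul minv mone n L B ->
  exists l b : Lift, is_lift_elt l /\ is_lift_elt b /\
    m137_filling_rel lift_eq lift_mul lift_inv lift_one n l b /\
    lifts L (fst l).
Proof.
  intros L B n HL HB Hrel. apply rel_iff in Hrel. destruct Hrel as [R1 R2].
  change (W1L mmul minv L B = W1R mmul minv L B) in R1. change (W2 mmul minv mone n L B = mone) in R2.
  destruct (lift_of L HL) as [p [Gp [Ip1 Ip2]]].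
  destruct (lift_of B HB) as [q [Gq [Iq1 Iq2]]].
  assert (G1 : good (W1L lift_mul lift_inv p q) (W1L mmul minv L B)).
  { unfold W1L. repeat (apply good_mul || apply good_inv); auto. }
  assert (G2 : good (W1R lift_mul lift_inv p q) (W1R mmul minv L B)).
  { unfold W1R. repeat (apply good_mul || apply good_inv); auto. }
  assert (G3 : good (W2 lift_mul lift_inv lift_one n p q) (W2 mmul minv mone n L B)).
  { unfold W2. repeat (apply good_mul || apply good_inv); auto; apply good_gpow; auto. }
  rewrite R1 in G1. rewrite R2 in G3.
  assert (K1 : exists k : Z, forall x, fst (W1L lift_mul lift_inv p q) x =
                 fst (W1R lift_mul lift_inv p q) x + IZR k * (2 * PI)).
  { destruct G1 as [c1 [_ [l1 _]]]. destruct G2 as [c2 [_ [l2 _]]].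
    set (dd := fun x => fst (W1L lift_mul lift_inv p q) x - fst (W1R lift_mul lift_inv p q) x).
    assert (Hd : forall x, exists k : Z, dd x = IZR k * (2 * PI)).
    { intro x. destruct (same_dir _ _ _ l1 l2 x) as [Hc Hs].
      destruct (cos_sin_eq _ _ Hc Hs) as [k Hk]. exists k. unfold dd. lra. }
    destruct (Hd 0) as [k Hk]. exists k. intro x.
    assert (dd x = dd 0) by (apply const_2pi; auto; apply continuity_minus; auto).
    unfold dd in *. lra. }
  assert (K2 : exists k : Z, forall x, fst (W2 lift_mul lift_inv lift_one n p q) x = x + IZR k * (2 * PI)).
  { destruct G3 as [c1 [_ [l1 _]]].
    set (dd := fun x => fst (W2 lift_mul lift_inv lift_one n p q) x - x).
    assert (Hd : forall x, exists k : Z, dd x = IZR k * (2 * PI)).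
    { intro x. destruct (same_dir _ _ _ l1 lifts_id x) as [Hc Hs].
      destruct (cos_sin_eq _ _ Hc Hs) as [k Hk]. exists k. unfold dd. lra. }
    destruct (Hd 0) as [k Hk]. exists k. intro x.
    assert (dd x = dd 0).
    { apply const_2pi; auto. apply (continuity_minus _ (fun x => x)); auto.
      apply derivable_continuous, derivable_id. }
    unfold dd in *. lra. }
  destruct K1 as [k1 K1]. destruct K2 as [k2 K2].
  set (a := k1). set (c := (- k2 - (Z.of_nat n - 2) * k1)%Z).
  destruct Gp as [cp1 [cp2 [lp1 [lp2 [ep1 ep2]]]]].
  destruct Gq as [cq1 [cq2 [lq1 [lq2 [eq1 eq2]]]]].
  pose proof (eqv_sh _ ep1) as Sp1. pose proof (eqv_sh _ ep2) as Sp2.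
  pose proof (eqv_sh _ eq1) as Sq1. pose proof (eqv_sh _ eq2) as Sq2.
  exists (shl a p), (shl c q).
  assert (Hsh : forall k, continuity (sh k)).
  { intro k. apply (continuity_plus (fun x => x) (fun _ => IZR k * (2 * PI))).
    apply derivable_continuous, derivable_id. apply continuity_const. intros ? ?; reflexivity. }
  assert (LE : forall (r : Lift) (A : Mat2) k, mdet A = 1 -> continuity (fst r) -> lifts A (fst r) ->
     (forall x, fst r (snd r x) = x) -> (forall x, snd r (fst r x) = x) -> Eqv (fst r) -> Eqv (snd r) ->
     is_lift_elt (shl k r) /\ lifts A (fst (shl k r))).
  { intros r A k HA cr lr i1 i2 er1 er2.
    assert (Hl : lifts A (fst (shl k r))).
    { replace A with (mmul A mone) by (destruct A; unfold mmul, mone; simpl; apply mat_ext'; ring).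
      apply (lifts_comp _ _ (fst r) (sh k)); auto. apply lifts_sh. }
    split; auto. unfold is_lift_elt, is_PSL2R_lift. split; [split|split].
    - apply (cont_comp (fst r) (sh k)); auto.
    - destruct A as [a11 a12 a21 a22]. exists a11, a12, a21, a22. split; [exact HA|]. exact Hl.
    - intro x. unfold shl; simpl. rewrite sh_sh. replace (- k + k)%Z with 0%Z by ring. unfold sh. simpl.
      replace (snd r x + 0 * (2 * PI)) with (snd r x) by ring. auto.
    - intro x. unfold shl; simpl. rewrite i2. rewrite sh_sh. replace (k + - k)%Z with 0%Z by ring. unfold sh. simpl. ring. }
  destruct (LE p L a HL cp1 lp1 Ip1 Ip2 ep1 ep2) as [El Ll].
  destruct (LE q B c HB cq1 lq1 Iq1 Iq2 eq1 eq2) as [Eb _].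
  split; [exact El|]. split; [exact Eb|]. split; [|exact Ll].
  apply rel_iff. split.
  - intro x. pose proof (K1 x) as H. unfold W1L, W1R, lift_mul, lift_inv in H |- *. unfold shl. cbn [fst snd] in H |- *.
    repeat (first [rewrite Sp1 | rewrite Sp2 | rewrite Sq1 | rewrite Sq2 | rewrite sh_sh]).
    unfold sh. rewrite H. unfold c, a. repeat (first [rewrite plus_IZR | rewrite opp_IZR | rewrite mult_IZR | rewrite minus_IZR]). ring.
  - intro x. pose proof (K2 x) as H. unfold W2 in H |- *. cbn [lift_mul lift_inv lift_one fst snd] in H |- *.
    rewrite gpow_shl by auto.
    set (Gp := fst (gpow lift_mul lift_one p n) x) in H |- *.
    unfold shl. cbn [fst snd].
    repeat (first [rewrite Sp1 | rewrite Sp2 | rewrite Sq1 | rewrite Sq2 | rewrite sh_sh]).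
    unfold sh. rewrite H. unfold c, a. repeat (first [rewrite plus_IZR | rewrite opp_IZR | rewrite mult_IZR | rewrite minus_IZR]). ring.
Qed.

Lemma mdet_mmul : forall A B, mdet (mmul A B) = mdet A * mdet B.
Proof. intros [] []; unfold mdet, mmul; simpl; ring. Qed.
Lemma mdet_minv : forall A, mdet (minv A) = mdet A.
Proof. intros []; unfold mdet, minv; simpl; ring. Qed.

Lemma gpow_L : forall z n, gpow mmul mone (Lm z) n = mkMat2 (z ^ n) 0 0 ((/ z) ^ n).
Proof.
  intros z n. induction n; simpl.
  - reflexivity.
  - rewrite IHn. unfold mmul, Lm; simpl. apply mat_ext; ring.
Qed.

Lemma exists_z : forall n, (0 < n)%nat -> exists z, 1 < z /\ gz z (sqrt (qz z)) * z ^ n = 1.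
Proof.
  intros n Hn.
  assert (HnR : 1 <= INR n) by (apply (le_INR 1); lia).
  assert (He0 : 0 < / (20000 * INR n)) by (apply Rinv_0_lt_compat; lra).
  assert (He1 : 20000 * INR n * / (20000 * INR n) = 1) by (field; lra).
  assert (He2 : / (20000 * INR n) <= 1/20000) by nra.
  destruct (Ranalysis5.IVT_interv (fun z => gz z (sqrt (qz z)) * z ^ n - 1) (1 + / (20000 * INR n)) 2)
    as [z [Hz Hzz]].
  - intros a Ha. apply cont_h. lra.
  - lra.
  - apply low_end; auto.
  - apply high_end; auto.
  - exists z. split; [lra|]. lra.
Qed.

Theorem mainTheorem6 : forall n : nat, (0 < n)%nat ->
  (exists L B : Mat2,
      in_SL2R L /\ in_SL2R B /\
      m137_filling_rel eq mmul minv mone n L B /\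
      (L <> mone \/ B <> mone))
  /\
  (exists l b : Lift,
      is_lift_elt l /\ is_lift_elt b /\
      m137_filling_rel lift_eq lift_mul lift_inv lift_one n l b /\
      (~ lift_eq l lift_one \/ ~ lift_eq b lift_one)).
Proof.
  intros n Hn. destruct (exists_z n Hn) as [z [Hz Hg]].
  destruct (wz_props z Hz) as [Hw [Hw2 HE]]. set (w := sqrt (qz z)) in *.
  assert (HdL : mdet (Lm z) = 1) by (unfold mdet, Lm; simpl; field; lra).
  assert (HdB : mdet (Bm z w) = 1) by (unfold mdet, Bm; simpl; field; lra).
  assert (Hrel : m137_filling_rel eq mmul minv mone n (Lm z) (Bm z w)).
  { apply rel_iff. split.
    - exact (rel1_ok z w Hz Hw HE).
    - change (mmul (muW (Lm z) (Bm z w)) (gpow mmul mone (Lm z) n) = mone).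
      destruct (mu_ok z w Hz Hw HE) as [M11 [M12 M21]].
      assert (Hdm : mdet (muW (Lm z) (Bm z w)) = 1).
      { unfold muW. rewrite !mdet_mmul, !mdet_minv, HdL, HdB. ring. }
      rewrite gpow_L.
      destruct (muW (Lm z) (Bm z w)) as [m1 m2 m3 m4]. simpl in M11, M12, M21.
      unfold mdet in Hdm; simpl in Hdm. subst m2 m3.
      assert (Hm4 : m4 = z ^ n).
      { rewrite M11 in Hdm. apply Rmult_eq_reg_l with (gz z w).
        - lra.
        - intro H0. rewrite H0 in Hg. lra. }
      unfold mmul, mone; simpl. apply mat_ext.
      + rewrite M11. lra.
      + ring.
      + ring.
      + rewrite Hm4. rewrite <- Rpow_mult_distr, Rinv_r by lra. rewrite pow1. ring. }
  assert (HLn : Lm z <> mone).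
  { unfold Lm, mone; intro H; injection H; intros; lra. }
  split.
  - exists (Lm z), (Bm z w). unfold in_SL2R. auto.
  - destruct (lift_rep (Lm z) (Bm z w) n HdL HdB Hrel) as [l [b [El [Eb [R Ll]]]]].
    exists l, b. split; auto. split; auto. split; auto. left. intro Heq.
    destruct (Ll (PI/4)) as [r [Hr [H1 H2]]]. unfold lift_eq in Heq. simpl in Heq. rewrite Heq in H1, H2.
    unfold Lm in H1, H2; simpl in H1, H2. rewrite cos_PI4, sin_PI4 in *.
    assert (Hs : 0 < 1 / sqrt 2).
    { apply Rdiv_lt_0_compat; [lra|]. apply sqrt_lt_R0; lra. }
    assert (z = r) by (apply Rmult_eq_reg_r with (1 / sqrt 2); lra).
    assert (/ z = r) by (apply Rmult_eq_reg_r with (1 / sqrt 2); lra).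
    assert (z * / z = 1) by (field; lra). nra.
Qed.
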